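(* Let $\mathcal{M}=((X,\mathcal{C}_X),\mathcal{V})$ be a closure model with associated closure coalgebra $(X,\eta)$, let $(Y,\theta)$ be a $\mathbf{C}$-coalgebra and $f:(X,\eta)\to(Y,\theta)$ a surjective coalgebra homomorphism. Define $\mathcal{C}_Y(B)=\{y\in Y\mid B\in(\theta y)_2\}$ for $B\subseteq Y$. Then $(Y,\mathcal{C}_Y)$ is a closure space.
   Context: A closure space is $(X,\mathcal{C})$ with $X$ non-empty and $\mathcal{C}:\mathcal{P}(X)\to\mathcal{P}(X)$ satisfying $\mathcal{C}(\emptyset)=\emptyset$, $A\subseteq\mathcal{C}(A)$, $\mathcal{C}(A_1\cup A_2)=\mathcal{C}(A_1)\cup\mathcal{C}(A_2)$. Closure model: closure space plus $\mathcal{V}:AP\to\mathcal{P}(X)$, $\mathcal{V}^{-1}(x)=\{p\mid x\in\mathcal{V}(p)\}$. Closure functor $\mathbf{C}X=\mathcal{P}(AP)\times\mathcal{P}(\mathcal{P}(X))$, $\mathbf{C}f(v,S)=(v,\{f[A]\mid A\in S\})$ (covariant powerset). The closure coalgebra of the model is $\eta(x)=(\mathcal{V}^{-1}(x),\{A\subseteq X\mid x\in\mathcal{C}_X(A)\})$. A homomorphism $f:(X,\eta)\to(Y,\theta)$ satisfies $\theta\circ f=(\mathbf{C}f)\circ\eta$. *)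

(* Defs.v *)
From mathcomp Require Import all_boot.
From mathcomp Require Import boolp classical_sets.
Set Implicit Arguments.
Unset Strict Implicit.
Unset Printing Implicit Defensive.
Local Open Scope classical_set_scope.

Definition closure_space (X : Type) (C : set X -> set X) : Prop :=
  [/\ (exists x : X, True),
      C set0 = set0,
      (forall A : set X, A `<=` C A) &
      (forall A1 A2 : set X, C (A1 `|` A2) = C A1 `|` C A2)].

Definition CF (AP X : Type) : Type := (set AP * set (set X))%type.

Definition CFmap (AP X Y : Type) (f : X -> Y) (p : CF AP X) : CF AP Y :=
  (p.1, [set f @` A | A in p.2]).

Definition Vinv (AP X : Type) (V : AP -> set X) (x : X) : set AP :=
  [set p | V p x].

Definition closure_coalg (AP X : Type) (C : set X -> set X) (V : AP -> set X)
  (x : X) : CF AP X :=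
  (Vinv V x, [set A : set X | C A x]).

Definition coalg_hom (AP X Y : Type) (eta : X -> CF AP X) (theta : Y -> CF AP Y)
  (f : X -> Y) : Prop :=
  forall x : X, theta (f x) = CFmap f (eta x).

(* Main.v *)
Require Import Defs.
From mathcomp Require Import all_boot.
From mathcomp Require Import boolp classical_sets.
Local Open Scope classical_set_scope.

Theorem lemma9 (AP X Y : Type) (C : set X -> set X) (V : AP -> set X)
  (theta : Y -> CF AP Y) (f : X -> Y) :
  closure_space C ->
  coalg_hom (closure_coalg C V) theta f ->
  (forall y : Y, exists x : X, f x = y) ->
  closure_space (fun B : set Y => [set y : Y | (theta y).2 B]).
Proof.
move=> [[x0 _] C0 Cext CU] hom surj.
have key : forall x B, (theta (f x)).2 B <-> exists2 A, C A x & f @` A = B.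
  by move=> x B; rewrite hom /CFmap /=; split.
have mono : forall A1 A2, A1 `<=` A2 -> C A1 `<=` C A2.
  move=> A1 A2 h z hz; have -> : A2 = A1 `|` A2 by rewrite setUidr.
  by rewrite CU; left.
have imgpre : forall B, f @` (f @^-1` B) = B.
  move=> B; apply/seteqP; split=> [z [x hx <-] //|z hz].
  by have [x hx] := surj z; exists x => //; rewrite /preimage /= hx.
split.
- by exists (f x0).
- apply/seteqP; split=> [y /= hy|//]; have [x hx] := surj y; subst y.
  move/key: hy => [A hA hfA].
  have A0 : A = set0.
    apply/seteqP; split=> [a ha|//]; have : (f @` A) (f a) by exists a.
    by rewrite hfA.
  by move: hA; rewrite A0 C0.
- move=> B y hy /=; have [x hx] := surj y; subst y.
  apply/key; exists (f @^-1` B); last exact: imgpre.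
  by apply: Cext.
- move=> B1 B2; apply/seteqP; split=> y /=; have [x hx] := surj y; subst y.
  + move/key=> [A hA hfA].
    have eA : A = (A `&` f @^-1` B1) `|` (A `&` f @^-1` B2).
      rewrite -setIUr; apply/esym/setIidl => a ha.
      have : (f @` A) (f a) by exists a.
      by rewrite hfA.
    have part : forall B, B `<=` B1 `|` B2 -> f @` (A `&` f @^-1` B) = B.
      move=> B hB; apply/seteqP; split=> [z [a [ha hb] <-] //|z hz].
      have : (f @` A) z by (rewrite hfA; apply: hB).
      by move=> [a ha fa]; exists a => //; split => //; rewrite /preimage /= fa.
    move: hA; rewrite eA CU => -[h|h].
    * by left; apply/key; exists (A `&` f @^-1` B1) => //; apply: part => z; left.
    * by right; apply/key; exists (A `&` f @^-1` B2) => //; apply: part => z; right.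
  + case=> /key [A hA hfA]; apply/key.
    * exists (A `|` f @^-1` B2).
        by apply: (mono A) => //; left.
      by rewrite image_setU imgpre hfA.
    * exists (f @^-1` B1 `|` A).
        by apply: (mono A) => //; right.
      by rewrite image_setU imgpre hfA.
Qed.
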